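(* For every integer $n\ge 5$, the independence polynomial $I(T_{5,n};t)$ is unimodal and its mode belongs to $\{\lambda_{n+2},\lambda_{n+2}+1,\lambda_{n+2}+2\}$, where $\lambda_{k}$ denotes the mode of the independence polynomial $I(P_k;t)$ of the path $P_k$ on $k$ vertices.
   Context: For a simple graph $G$, the independence polynomial is $I(G;t)=\sum_{k\ge 0}s_k(G)t^k$, where $s_k(G)$ is the number of independent sets (sets of pairwise non-adjacent vertices) of size $k$ in $G$. $P_k$ is the path on $k$ vertices; its independence polynomial is known to be unimodal. For integers $m\ge 3$, $n\ge 1$, the tadpole graph $T_{m,n}$ is the simple graph with vertex set $\{x_1,\dots,x_m,y_1,\dots,y_n\}$ and edges $\{x_i,x_{i+1}\}$ for $1\le i\le m-1$, $\{x_m,x_1\}$, $\{y_j,y_{j+1}\}$ for $1\le j\le n-1$, and $\{x_m,y_1\}$. A polynomial $\sum a_kt^k$ with nonnegative coefficients is unimodal if $a_0\le\cdots\le a_m\ge a_{m+1}\ge\cdots$ for some $m$; with $a_{-1}=0$, its mode is the unique $i$ with $a_{i-1}<a_i\ge a_{i+1}\ge a_{i+2}\ge\cdots$. *)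

(* Defs.v *)
From mathcomp Require Import all_boot.
Set Implicit Arguments. Unset Strict Implicit. Unset Printing Implicit Defensive.

(* A simple graph is given by a symmetric irreflexive relation on a finType. *)

Definition independent (T : finType) (e : rel T) (S : {set T}) : bool :=
  [forall x in S, forall y in S, ~~ e x y].

(* s_k(G): the number of independent sets of size k;
   I(G;t) = \sum_k indep_count e k * t^k *)
Definition indep_count (T : finType) (e : rel T) (k : nat) : nat :=
  #|[set S : {set T} | independent e S && (#|S| == k)]|.

(* Path P_k on vertices 'I_k (vertex i+1 of the paper is i here):
   edges {i, i+1}. *)
Definition path_adj (k : nat) : rel 'I_k :=
  fun u v => (u.+1 == v :> nat) || (v.+1 == u :> nat).

(* Tadpole T_{m,n} on vertices 'I_(m+n):
   x_i (1 <= i <= m) is vertex i-1, y_j (1 <= j <= n) is vertex m+j-1.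
   Directed edge list (then symmetrised):
   {x_i,x_(i+1)} for 1<=i<=m-1, {x_m,x_1}, {y_j,y_(j+1)} for 1<=j<=n-1,
   {x_m,y_1}. *)
Definition tadpole_edge (m n : nat) (u v : nat) : bool :=
  [|| (u.+1 == v) && (v < m)
    , (u == m.-1) && (v == 0)
    , (m <= u) && (u.+1 == v) && (v < m + n)
    | (u == m.-1) && (v == m) ].

Definition tadpole_adj (m n : nat) : rel 'I_(m + n) :=
  fun u v => tadpole_edge m n u v || tadpole_edge m n v u.

Definition unimodal (a : nat -> nat) : Prop :=
  exists m, (forall i, i < m -> a i <= a i.+1) /\
            (forall i, m <= i -> a i.+1 <= a i).

Definition is_mode (a : nat -> nat) (i : nat) : Prop :=
  (if i is i'.+1 then a i' < a i else 0 < a 0) /\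
  (forall j, i <= j -> a j.+1 <= a j).

(* Main.v *)
Require Import Defs.
From mathcomp Require Import all_boot all_algebra.
From mathcomp Require Import zify ring.
Set Implicit Arguments. Unset Strict Implicit. Unset Printing Implicit Defensive.

Definition indepE (E : nat -> nat -> bool) N (S : {set 'I_N}) :=
  [forall x in S, forall y in S, ~~ E x y].
Definition avoid (F : nat -> bool) N (S : {set 'I_N}) := [forall x in S, ~~ F x].
Definition cF E N F j := \sum_(S : {set 'I_N}) (indepE E S && avoid F S && (#|S| == j)).

Section Split.
Variable N : nat.
Definition wd (x : 'I_N) : 'I_N.+1 := widen_ord (leqnSn N) x.
Lemma wd_inj : injective wd.
Proof. by move=> x y /(congr1 val) /= /val_inj. Qed.
Definition W (A : {set 'I_N}) : {set 'I_N.+1} := wd @: A.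
Definition ext (p : {set 'I_N} * bool) : {set 'I_N.+1} :=
  if p.2 then ord_max |: W p.1 else W p.1.
Definition restr (S : {set 'I_N.+1}) : {set 'I_N} * bool :=
  ([set x | wd x \in S], ord_max \in S).

Lemma max_notin_W A : ord_max \notin W A.
Proof.
apply/imsetP => -[x _] /(congr1 val) /= H.
by move: (ltn_ord x); rewrite -H ltnn.
Qed.

Lemma wd_neq_max x : (wd x == ord_max) = false.
Proof. apply/negbTE/eqP => /(congr1 val) /= H. by move: (ltn_ord x); rewrite H ltnn. Qed.

Lemma ext_bij : bijective ext.
Proof.
exists restr.
  move=> [A b]; rewrite /restr /ext /=; congr pair.
    apply/setP => x; rewrite inE; case: b => /=;
    rewrite ?in_setU1 ?wd_neq_max /= /W mem_imset //; exact: wd_inj.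
  by case: b => /=; rewrite ?setU11 // (negbTE (max_notin_W _)).
move=> S; rewrite /restr /ext /=.
apply/setP => y.
have [->|ny] := eqVneq y ord_max.
  case: ifP => H; first by rewrite setU11.
  by rewrite (negbTE (max_notin_W _)).
have yN : (y : nat) < N.
  have : (y : nat) != N by apply: contra ny => /eqP H; apply/eqP/val_inj.
  have := ltn_ord y. lia.
have -> : y = wd (Ordinal yN) by apply/val_inj.
case: ifP => _; rewrite ?in_setU1 ?wd_neq_max /= /W mem_imset ?inE //; exact: wd_inj.
Qed.

Lemma split_sum (P : {set 'I_N.+1} -> nat) :
  \sum_(S : {set 'I_N.+1}) P S = \sum_(A : {set 'I_N}) (P (W A) + P (ord_max |: W A)).
Proof.
rewrite (reindex ext); last by apply: onW_bij; exact: ext_bij.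
rewrite -(pair_big xpredT xpredT (fun A b => P (ext (A, b)))) /=.
apply: eq_bigr => A _; rewrite big_bool /= addnC //.
Qed.

End Split.

Section Facts.
Variable N : nat.
Implicit Types A : {set 'I_N}.

Lemma inW A (y : 'I_N.+1) : (y \in W A) = [exists x in A, y == wd x].
Proof.
apply/imsetP/existsP => [[x xA ->]|[x /andP[xA /eqP ->]]]; last by exists x.
by exists x; rewrite xA eqxx.
Qed.

Lemma card_W A : #|W A| = #|A|.
Proof. by rewrite card_imset //; exact: (@wd_inj N). Qed.

Lemma card_WU A : #|ord_max |: W A| = #|A|.+1.
Proof. by rewrite cardsU1 max_notin_W card_W. Qed.

Lemma indep_W E A : indepE E (W A) = indepE E A.
Proof.
apply/forall_inP/forall_inP => H x xA.
  apply/forall_inP => y yA.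
  have := H (wd x); rewrite /W mem_imset; last exact: wd_inj.
  move=> /(_ xA) /forall_inP /(_ (wd y)); rewrite mem_imset; last exact: wd_inj.
  by move=> /(_ yA).
apply/forall_inP => y yA.
case/imsetP: xA => x' x'A ->; case/imsetP: yA => y' y'A ->.
by have := H x' x'A => /forall_inP /(_ y' y'A).
Qed.

Lemma avoid_W F A : avoid F (W A) = avoid F A.
Proof.
apply/forall_inP/forall_inP => H x xA.
  by have := H (wd x); rewrite /W mem_imset; [move=> /(_ xA) | exact: wd_inj].
by case/imsetP: xA => x' x'A ->; exact: H.
Qed.

Lemma avoid_WU F A : avoid F (ord_max |: W A) = ~~ F N && avoid F A.
Proof.
apply/forall_inP/andP => [H|[HN HA] x].
  split; first by have := H ord_max; rewrite setU11 => /(_ isT).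
  rewrite -(avoid_W F A); apply/forall_inP => x xA; apply: H; by rewrite in_setU1 xA orbT.
rewrite in_setU1 => /orP[/eqP ->//|xA].
by move: HA; rewrite -(avoid_W F A) => /forall_inP; apply.
Qed.

End Facts.

Section Facts2.
Variable N : nat.
Implicit Types A : {set 'I_N}.

Lemma indep_WU E A : indepE E (ord_max |: W A) =
  [&& ~~ E N N, avoid (fun x => E x N || E N x) A & indepE E A].
Proof.
rewrite -(indep_W E A) -(avoid_W _ A).
apply/forall_inP/and3P => [H|[HNN Hav Hind] x].
  split.
  - by have := H ord_max (setU11 _ _) => /forall_inP /(_ ord_max (setU11 _ _)).
  - apply/forall_inP => x xW.
    have xU : x \in ord_max |: W A by rewrite in_setU1 xW orbT.
    rewrite /= negb_or; apply/andP; split.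
      by have := H x xU => /forall_inP /(_ ord_max (setU11 _ _)).
    by have := H ord_max (setU11 _ _) => /forall_inP /(_ x xU).
  - apply/forall_inP => x xW; apply/forall_inP => y yW.
    have xU : x \in ord_max |: W A by rewrite in_setU1 xW orbT.
    have yU : y \in ord_max |: W A by rewrite in_setU1 yW orbT.
    by have := H x xU => /forall_inP /(_ y yU).
rewrite in_setU1 => /orP[/eqP ->|xW]; apply/forall_inP => y; rewrite in_setU1 => /orP[/eqP ->|yW] //=.
- by move/forall_inP: Hav => /(_ y yW) /=; rewrite negb_or => /andP[_].
- by move/forall_inP: Hav => /(_ x xW) /=; rewrite negb_or => /andP[].
- by move/forall_inP: Hind => /(_ x xW) /forall_inP /(_ y yW).
Qed.

Lemma avoid_or (F G : nat -> bool) A :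
  avoid (fun x => F x || G x) A = avoid F A && avoid G A.
Proof.
apply/forall_inP/andP => [H|[/forall_inP H1 /forall_inP H2] x xA].
  by split; apply/forall_inP => x xA; have := H x xA; rewrite negb_or => /andP[].
by rewrite negb_or H1 // H2.
Qed.

Lemma cF_rec E F j : cF E N.+1 F j = cF E N F j +
  (if F N || E N N then 0 else if j is j'.+1 then cF E N (fun x => F x || (E x N || E N x)) j' else 0).
Proof.
rewrite /cF split_sum big_split /=; congr addn.
  by apply: eq_bigr => A _; rewrite indep_W avoid_W card_W.
case: ifP => HF.
  rewrite big1 // => A _; rewrite indep_WU avoid_WU.
  by case/orP: HF => ->; rewrite ?andbF ?andFb.
move/norP: HF => [HF HE].
case: j => [|j].
  by rewrite big1 // => A _; rewrite card_WU andbF.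
apply: eq_bigr => A _; rewrite indep_WU avoid_WU card_WU eqSS HF HE /=.
congr (nat_of_bool _); rewrite -!andbA (avoid_or F (fun x => E x N || E N x)).
by case: (avoid F A); case: (avoid _ A); case: (indepE E A); case: (_ == _).
Qed.

Lemma cF_ext E E' F F' j :
  (forall x y, x < N -> y < N -> E x y = E' x y) ->
  (forall x, x < N -> F x = F' x) ->
  cF E N F j = cF E' N F' j.
Proof.
move=> HE HF; apply: eq_bigr => S _; rewrite /indepE /avoid; congr (nat_of_bool (_ && _ && _)).
  apply: eq_forallb_in => x _; apply: eq_forallb_in => y _; by rewrite HE.
by apply: eq_forallb_in => x _; rewrite HF.
Qed.

End Facts2.

Lemma cF0 E F j : cF E 0 F j = (j == 0).
Proof.
rewrite /cF (bigD1 set0) //= big1.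
  rewrite cards0 addn0.
  have -> : indepE E (set0 : {set 'I_0}) by apply/forall_inP => x; rewrite inE.
  have -> : avoid F (set0 : {set 'I_0}) by apply/forall_inP => x; rewrite inE.
  by rewrite eq_sym.
move=> S /negP []; apply/eqP/setP => -[m i]; exfalso; by rewrite ltn0 in i.
Qed.

Definition g m j := 'C(m - j, j).
Definition sh (f : nat -> nat) j := if j is j'.+1 then f j' else 0.
Definition h M j := g M.+2 j + 2 * sh (g M.+2) j + sh (g M) j + sh (sh (g M)) j.

Lemma g_small m j : m < j.*2 -> g m j = 0.
Proof. move=> H; rewrite /g bin_small //; lia. Qed.

Lemma grec m j : g m.+2 j = g m.+1 j + sh (g m) j.
Proof.
case: j => [|j] /=; first by rewrite /g !subn0 !bin0.
rewrite /g.
case: (leqP j m) => H.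
  have -> : m.+2 - j.+1 = (m - j).+1 by lia.
  have -> : m.+1 - j.+1 = m - j by lia.
  by rewrite binS.
rewrite !bin_small //; lia.
Qed.

Lemma hrec M j : h M.+2 j = h M.+1 j + sh (h M) j.
Proof.
rewrite /h.
case: j => [|[|[|j]]] /=; do ?(rewrite !grec /=); lia.
Qed.

Definition Ep (u v : nat) := (u.+1 == v) || (v.+1 == u).

Lemma cF_path k j : cF Ep k (fun _ => false) j = g k.+1 j.
Proof.
suff H : forall k, (forall j, cF Ep k (fun _ => false) j = g k.+1 j) /\
                   (forall j, cF Ep k.+1 (fun _ => false) j = g k.+2 j) by case: (H k) => ->.
clear k j; elim=> [|k [IH1 IH2]].
  split=> j.
    rewrite cF0 /g; case: j => [|[|j]] //=; rewrite bin_small //; lia.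
  rewrite cF_rec cF0 /=; case: j => [|[|j]] //=; rewrite cF0 /g //= bin_small //; lia.
split=> // j.
rewrite cF_rec IH2 (grec k.+1) /=.
have -> : Ep k.+1 k.+1 = false by rewrite /Ep; apply/negbTE; lia.
case: j => [|j] //=; congr addn.
rewrite cF_rec /=.
have -> : Ep k k.+1 = true by rewrite /Ep; lia.
rewrite /= addn0 -IH1; apply: cF_ext => // x xk; rewrite /Ep; apply/negbTE; lia.
Qed.

Definition ET n (u v : nat) := tadpole_edge 5 n u v || tadpole_edge 5 n v u.

Lemma h0 j : h 0 j = nth 0 [:: 1; 4; 3] j.
Proof. case: j => [|[|[|j]]] //=; rewrite /h /= /g nth_nil !bin_small; lia. Qed.
Lemma h1 j : h 1 j = nth 0 [:: 1; 5; 5] j.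
Proof. case: j => [|[|[|j]]] //=; rewrite /h /= /g nth_nil !bin_small; lia. Qed.

Lemma cFT4 n j : cF (ET n) 4 (fun _ => false) j = h 0 j.
Proof.
rewrite h0 /ET; case: j => [|[|[|j]]]; do ?(rewrite !cF_rec /=); rewrite ?cF0 //=; rewrite ?nth_nil //.
Qed.

Lemma cFT5 n j : cF (ET n) 5 (fun _ => false) j = h 1 j.
Proof.
rewrite h1 /ET; case: j => [|[|[|j]]]; do ?(rewrite !cF_rec /=); rewrite ?cF0 //=; rewrite ?nth_nil //.
Qed.

Lemma ET_self n x : ET n x x = false.
Proof. rewrite /ET orbb /tadpole_edge. apply/negP => /or4P []; lia. Qed.

Lemma ET_next n N : N.+1 < 5 + n -> ET n N N.+1.
Proof. move=> H; rewrite /ET /tadpole_edge; apply/orP; left.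
apply/or4P. case: (ltnP N 4) => H5. by constructor 1; apply/andP; split => //; lia.
case: (ltnP N 5) => H4. by constructor 4; apply/andP; split; apply/eqP; lia.
by constructor 3; apply/andP; split; [apply/andP; split|]; lia. Qed.

Lemma ET_far n N x : 4 <= N -> x < N -> ET n x N.+1 || ET n N.+1 x = false.
Proof. move=> *; rewrite /ET /tadpole_edge; apply/negP => /orP[] /orP[] /or4P []; lia. Qed.

Lemma cFT_rec n N j : 4 <= N -> N.+2 <= 5 + n ->
  cF (ET n) N.+2 (fun _ => false) j =
  cF (ET n) N.+1 (fun _ => false) j + sh (cF (ET n) N (fun _ => false)) j.
Proof.
move=> H4 Hn.
rewrite cF_rec /= ET_self; case: j => [|j] //=; congr addn.
rewrite cF_rec /= ET_next //= addn0.
apply: cF_ext => // x xN; exact: ET_far.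
Qed.

Lemma cFT_pair n M : M.+1 <= n.+1 -> (forall j, cF (ET n) (M + 4) (fun _ => false) j = h M j) /\
   (forall j, cF (ET n) (M.+1 + 4) (fun _ => false) j = h M.+1 j).
Proof.
elim: M => [|M IH] HM.
  by split=> j; [exact: cFT4 | exact: cFT5].
have [IH1 IH2] := IH (ltnW HM).
split=> // j.
rewrite hrec -IH2.
have -> : M.+2 + 4 = (M + 4).+2 by lia.
rewrite cFT_rec; [|lia|lia].
have -> : (M + 4).+1 = M.+1 + 4 by lia.
rewrite IH2; case: j => [|j] //=; by rewrite IH1.
Qed.

Lemma card_sum (T : finType) (P : pred T) : #|[set x | P x]| = \sum_(x : T) P x.
Proof.
rewrite -sum1dep_card big_mkcond /=; apply: eq_bigr => x _; by case: (P x).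
Qed.

Lemma avoid0 N (S : {set 'I_N}) : avoid (fun _ => false) S.
Proof. by apply/forall_inP. Qed.

Lemma count_path k j : indep_count (@path_adj k) j = g k.+1 j.
Proof.
rewrite -cF_path /indep_count card_sum /cF; apply: eq_bigr => S _.
by rewrite avoid0 andbT.
Qed.

Lemma count_tad n j : indep_count (@tadpole_adj 5 n) j = h n.+1 j.
Proof.
have [_ H] := cFT_pair (leqnn n.+1).
have E : n.+1 + 4 = 5 + n by lia. rewrite E in H.
rewrite -H /indep_count card_sum /cF; apply: eq_bigr => S _.
by rewrite avoid0 andbT.
Qed.

Lemma ratio m j : j.+1 * (m - j) * g m j.+1 = (m - 2 * j) * (m - 2 * j - 1) * g m j.
Proof.
rewrite /g subnS.
have H1 := mul_bin_left (m - j).-1 j.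
have H2 := mul_bin_down (m - j) j.
have e1 : m - 2 * j = (m - j) - j by lia.
have e2 : m - 2 * j - 1 = (m - j).-1 - j by lia.
rewrite e2 e1.
set a := m - j in H1 H2 *.
set C1 := 'C(a.-1, j.+1) in H1 *.
set C2 := 'C(a.-1, j) in H1 H2 *.
set C3 := 'C(a, j) in H2 *.
set b := a.-1 - j in H1 *. set c := a - j in H2 *.
by rewrite (mulnC j.+1) -mulnA H1 mulnCA H2 mulnA (mulnC b).
Qed.

Lemma ratio_le m j : (m - 2 * j) * (m - 2 * j - 1) <= j.+1 * (m - j) -> g m j.+1 <= g m j.
Proof.
move=> H.
case: (posnP (j.+1 * (m - j))) => [H0|Hp].
  have E : m - j = 0 by lia.
  rewrite /g bin_small //; lia.
rewrite -(leq_pmul2l Hp) ratio; exact: leq_mul.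
Qed.

Lemma ratio_lt_inv m j : g m j < g m j.+1 -> j.+1 * (m - j) < (m - 2 * j) * (m - 2 * j - 1).
Proof. move=> H; rewrite ltnNge; apply/negP => /ratio_le; by rewrite leqNgt H. Qed.

Lemma ratio_le_inv m j : 0 < g m j -> g m j.+1 <= g m j ->
  (m - 2 * j) * (m - 2 * j - 1) <= j.+1 * (m - j).
Proof.
move=> Hg H; rewrite -(leq_pmul2r Hg) -ratio; exact: leq_mul.
Qed.

Lemma ratio_lt m j : 0 < g m j -> j.+1 * (m - j) < (m - 2 * j) * (m - 2 * j - 1) ->
  g m j < g m j.+1.
Proof.
move=> Hg H; rewrite ltnNge; apply/negP => H'.
by have := ratio_le_inv Hg H'; rewrite leqNgt H.
Qed.

Lemma Rstep m j : g m j.+1 <= g m j -> g m j.+2 <= g m j.+1.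
Proof.
move=> H.
case: (posnP (g m j)) => [H0|Hp].
  have : g m j.+1 = 0 by move: H; rewrite H0 leqn0 => /eqP.
  rewrite /g => E.
  have : m - j.+1 < j.+1 by rewrite ltnNge -bin_gt0 E.
  move=> Hs; rewrite bin_small //; lia.
have Hq := ratio_le_inv Hp H.
apply: ratio_le.
case: (leqP m (2 * j + 3)) => Hm.
  have -> : m - 2 * j.+1 - 1 = 0 by lia. by rewrite muln0.
have [e He] : exists e, m = e + 2 * j + 4 by exists (m - (2 * j + 4)); lia.
subst m.
have -> : e + 2 * j + 4 - 2 * j.+1 - 1 = e + 1 by lia.
have -> : e + 2 * j + 4 - 2 * j.+1 = e + 2 by lia.
have -> : e + 2 * j + 4 - j.+1 = e + j + 3 by lia.
have E1 : e + 2 * j + 4 - 2 * j = e + 4 by lia.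
have E2 : e + 2 * j + 4 - 2 * j - 1 = e + 3 by lia.
have E3 : e + 2 * j + 4 - j = e + j + 4 by lia.
rewrite E2 E1 E3 in Hq.
nia.
Qed.

Lemma Riter m j : g m j.+1 <= g m j -> forall i, j <= i -> g m i.+1 <= g m i.
Proof.
move=> H i Hi; rewrite -(subnKC Hi).
elim: (i - j) => [|k IH]; first by rewrite addn0.
by rewrite addnS; apply: Rstep.
Qed.

Lemma Kpoly k d : 1 <= k -> (d+3)*(d+2) <= (k+1)*(k+d+3) -> k*(k+d+4) < (d+5)*(d+4) ->
  (d+1)*d*(d+2)*(d+3) + (k+d+1)*(k+d+2)*(d+2)*(d+3) <= (k+d+1)*(k+d+2)*(k+1)*(2*k+d+3).
Proof. move=> *; nia. Qed.

Lemma Kbin l d : (d+3)*(d+2) <= (l.+1+1)*(l.+1+d+3) -> l.+1*(l.+1+d+4) < (d+5)*(d+4) ->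
  'C(l.+1 + d, l.+2) + 'C((l.+1 + d).+2, l.+2) <= 'C((l.+1 + d).+2, l) + 'C((l.+1 + d).+3, l.+1).
Proof.
move=> c1 c2.
have KP := Kpoly (ltn0Sn l) c1 c2.
set p := l.+1 + d in KP *.
have h1 := mul_bin_left p l.+1.
have h2 := mul_bin_left p l.
have h3 := mul_bin_diag p.+1 l.
have h4 := mul_bin_diag p.+2 l.+1.
have h5 := mul_bin_down p.+1 l.
have h6 := mul_bin_down p.+2 l.
have h7 := mul_bin_diag p.+3 l.
rewrite /= in h3 h4 h5 h6 h7.
have s1 : p - l.+1 = d by rewrite /p; lia.
have s2 : p - l = d.+1 by rewrite /p; lia.
have s3 : p.+1 - l = d + 2 by rewrite /p; lia.
have s4 : p.+2 - l = d + 3 by rewrite /p; lia.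
rewrite s1 in h1; rewrite s2 in h2; rewrite s3 in h5; rewrite s4 in h6.
set A1 := 'C(p, l.+2) in h1 *. set A2 := 'C(p.+2, l.+2) in h4 *.
set A3 := 'C(p.+2, l) in h6 h7 *. set A4 := 'C(p.+3, l.+1) in h7 *.
set B := 'C(p, l) in h2 h3 h5 *.
set C1 := 'C(p, l.+1) in h1 h2. set C2 := 'C(p.+1, l.+1) in h3 h4.
set C3 := 'C(p.+1, l) in h5 h6.
have e1 : l.+1 * l.+2 * A1 = (d+1) * d * B.
  transitivity (l.+1 * (l.+2 * A1)); first ring.
  rewrite h1; transitivity (d * (l.+1 * C1)); first ring.
  rewrite h2; ring.
have e2 : l.+1 * l.+2 * A2 = p.+1 * p.+2 * B.
  transitivity (l.+1 * (l.+2 * A2)); first ring.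
  rewrite -h4; transitivity (p.+2 * (l.+1 * C2)); first ring.
  rewrite -h3; ring.
have e3 : (d+2) * (d+3) * A3 = p.+1 * p.+2 * B.
  transitivity ((d+2) * ((d+3) * A3)); first ring.
  rewrite -h6; transitivity (p.+2 * ((d+2) * C3)); first ring.
  rewrite -h5; ring.
have Mp : 0 < l.+1 * l.+2 * (d+2) * (d+3) by rewrite !muln_gt0 !addnS.
rewrite -(leq_pmul2l Mp) mulnDr [X in _ <= X]mulnDr.
have E1 : l.+1 * l.+2 * (d+2) * (d+3) * A1 = ((d+2)*(d+3)*(d+1)*d) * B.
  transitivity ((d+2)*(d+3)*(l.+1 * l.+2 * A1)); first ring.
  rewrite e1; ring.
have E2 : l.+1 * l.+2 * (d+2) * (d+3) * A2 = ((d+2)*(d+3)*p.+1*p.+2) * B.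
  transitivity ((d+2)*(d+3)*(l.+1 * l.+2 * A2)); first ring.
  rewrite e2; ring.
have E3 : l.+1 * l.+2 * (d+2) * (d+3) * A3 = (l.+1*l.+2*p.+1*p.+2) * B.
  transitivity (l.+1*l.+2*((d+2) * (d+3) * A3)); first ring.
  rewrite e3; ring.
have E4 : l.+1 * l.+2 * (d+2) * (d+3) * A4 = (l.+2*p.+3*p.+1*p.+2) * B.
  transitivity (l.+2 * (d+2) * (d+3) * (l.+1 * A4)); first ring.
  rewrite -h7; transitivity (l.+2 * p.+3 * ((d+2) * (d+3) * A3)); first ring.
  rewrite e3; ring.
rewrite E1 E2 E3 E4 -!mulnDl; apply: leq_mul => //.
move: KP; rewrite /p; lia.
Qed.

Lemma sh_le f j : (forall i, i.+1 <= j -> f i <= f i.+1) -> sh f j <= sh f j.+1.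
Proof. by case: j => [|j] //= H; apply: H. Qed.

Lemma key n L : 5 <= n -> is_mode (g n.+3) L ->
  (forall j, j < L -> h n.+1 j < h n.+1 j.+1) /\ (forall j, L < j -> h n.+1 j.+1 <= h n.+1 j).
Proof.
move=> n5 [Hl1 Hdec].
have u0 : g n.+3 0 = 1 by rewrite /g subn0 bin0.
have u1 : g n.+3 1 = n.+2 by rewrite /g subn1 /= bin1.
case: L Hl1 Hdec => [|[|l]] Hl1 Hdec.
- by have := Hdec 0 isT; rewrite u0 u1.
- have upos : 0 < g n.+3 1 by rewrite u1.
  have := ratio_le_inv upos (Hdec 1 isT).
  have -> : n.+3 - 2 * 1 - 1 = n by lia.
  have -> : n.+3 - 2 * 1 = n.+1 by lia.
  have -> : n.+3 - 1 = n.+2 by lia.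
  nia.
rewrite /= in Hl1.
have Hinc : forall j, j < l.+2 -> g n.+3 j < g n.+3 j.+1.
  move=> j Hj; rewrite ltnNge; apply/negP => Hle.
  have := Riter Hle (i := l.+1) (Hj : j <= l.+1); by rewrite leqNgt Hl1.
have c2 := ratio_lt_inv Hl1.
have upos : 0 < g n.+3 l.+2 by apply: leq_ltn_trans Hl1.
have c1 := ratio_le_inv upos (Hdec l.+2 (leqnn _)).
have bnd : l.+2 <= n.+3 - l.+2 by rewrite -bin_gt0.
have [e He] : exists e, n.+3 = 2 * l.+2 + e by exists (n.+3 - 2 * l.+2); lia.
have E1 : n.+3 - 2 * l.+2 - 1 = e.-1 by lia.
have E2 : n.+3 - 2 * l.+2 = e by lia.
have E3 : n.+3 - l.+2 = l.+2 + e by lia.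
have E4 : n.+3 - 2 * l.+1 - 1 = e + 1 by lia.
have E5 : n.+3 - 2 * l.+1 = e + 2 by lia.
have E6 : n.+3 - l.+1 = l.+3 + e by lia.
rewrite E1 E2 E3 in c1; rewrite E4 E5 E6 in c2.
have e3 : 3 <= e by nia.
have [d Hd] : exists d, n = 2 * l.+2 + d by exists (e - 3); lia.
subst n.
have Hed : e = d + 3 by lia.
subst e.
have c1' : (d+3)*(d+2) <= (l.+2+1)*(l.+2+d+3).
  move: c1. rewrite addnS /=. nia.
have c2' : l.+2*(l.+2+d+4) < (d+5)*(d+4) by nia.
set N := 2 * l.+2 + d in Hinc Hdec Hl1 upos bnd *.
have W2 : forall i, l.+2 <= i -> g N.+1 i.+1 <= g N.+1 i.
  apply: Riter; apply: ratio_le.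
  have -> : N.+1 - 2 * l.+2 - 1 = d by rewrite /N; lia.
  have -> : N.+1 - 2 * l.+2 = d.+1 by rewrite /N; lia.
  have -> : N.+1 - l.+2 = l.+2 + d.+1 by rewrite /N; lia.
  nia.
have W1 : forall i, i.+2 <= l.+2 -> g N.+1 i <= g N.+1 i.+1.
  have Hw : g N.+1 l < g N.+1 l.+1.
    apply: ratio_lt.
      rewrite /g bin_gt0 /N; lia.
    have -> : N.+1 - 2 * l - 1 = d + 4 by rewrite /N; lia.
    have -> : N.+1 - 2 * l = d + 5 by rewrite /N; lia.
    have -> : N.+1 - l = l + d + 5 by rewrite /N; lia.
    nia.
  move=> i Hi; rewrite leqNgt; apply/negP => /ltnW Hle.
  have := Riter Hle (i := l) (Hi : i <= l); by rewrite leqNgt Hw.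
have K : g N.+1 l.+3 + g N.+3 l.+3 <= g N.+1 l.+1 + g N.+3 l.+2.
  have := Kbin c1' c2'.
  rewrite /g.
  have -> : N.+1 - l.+3 = l.+2 + d by rewrite /N; lia.
  have -> : N.+3 - l.+3 = (l.+2 + d).+2 by rewrite /N; lia.
  have -> : N.+1 - l.+1 = (l.+2 + d).+2 by rewrite /N; lia.
  by have -> : N.+3 - l.+2 = (l.+2 + d).+3 by rewrite /N; lia.
split.
  move=> j Hj; rewrite /h.
  have a1 := Hinc j Hj.
  have a2 : sh (g N.+3) j <= sh (g N.+3) j.+1.
    apply: sh_le => i Hi; apply: ltnW; apply: Hinc; lia.
  have a3 : sh (g N.+1) j <= sh (g N.+1) j.+1.
    apply: sh_le => i Hi; apply: W1; lia.
  have a4 : sh (sh (g N.+1)) j <= sh (sh (g N.+1)) j.+1.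
    apply: sh_le => i Hi; apply: sh_le => i' Hi'; apply: W1; lia.
  lia.
move=> j Hj; rewrite /h.
case: j Hj => [|[|j]] Hj //=.
have b1 : g N.+3 j.+3 <= g N.+3 j.+2 by apply: Hdec; lia.
have b2 : g N.+3 j.+2 <= g N.+3 j.+1 by apply: Hdec; lia.
have b3 : g N.+1 j.+2 <= g N.+1 j.+1 by apply: W2; lia.
case: (ltnP j l.+2) => Hjl.
  have -> : j = l.+1 by lia.
  have b4 : g N.+3 l.+4 <= g N.+3 l.+3 by apply: Hdec; lia.
  have b5 : g N.+3 l.+3 <= g N.+3 l.+2 by apply: Hdec; lia.
  lia.
have b4 : g N.+1 j.+1 <= g N.+1 j by apply: W2.
lia.
Qed.

Lemma is_mode_ext a b i : (forall j, a j = b j) -> is_mode b i -> is_mode a i.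
Proof.
move=> E [H1 H2]; split; last by move=> j /H2; rewrite !E.
by move: H1; case: i {H2} => [|i] /=; rewrite !E.
Qed.

Lemma unimodal_ext a b : (forall j, a j = b j) -> unimodal b -> unimodal a.
Proof.
move=> E [m [H1 H2]]; exists m; split=> i Hi; rewrite !E; [exact: H1 | exact: H2].
Qed.

Lemma path_mode_exists n : 5 <= n -> exists l, is_mode (g n.+3) l.
Proof.
move=> n5.
have ex : exists j, g n.+3 j.+1 <= g n.+3 j.
  exists n.+3; rewrite /g bin_small //; lia.
case: (ex_minnP ex) => l Pl Hmin.
exists l; split.
  case: l Pl Hmin => [|l] Pl Hmin.
    move: Pl; rewrite /g subn0 subn1 bin0 /= bin1; lia.
  rewrite ltnNge; apply/negP => /Hmin; lia.
exact: Riter Pl.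
Qed.

Theorem main (n : nat) (hn : 5 <= n) :
  unimodal (indep_count (@tadpole_adj 5 n)) /\
  (exists i, is_mode (indep_count (@tadpole_adj 5 n)) i) /\
  (forall i l, is_mode (indep_count (@tadpole_adj 5 n)) i ->
               is_mode (indep_count (@path_adj (n + 2))) l ->
               l <= i <= l + 2).
Proof.
have ET := count_tad n.
have EP : forall j, indep_count (@path_adj (n + 2)) j = g n.+3 j.
  by move=> j; rewrite count_path addn2.
have [l0 Hl0] := path_mode_exists hn.
have [I0 D0] := key hn Hl0.
have l0pos : 0 < l0.
  case: l0 Hl0 {I0 D0} => // [[_ H]]; have := H 0 isT; rewrite /g subn0 subn1 bin0 /= bin1; lia.
split.
  apply: (unimodal_ext ET).
  case: (leqP (h n.+1 l0.+1) (h n.+1 l0)) => Hc.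
    exists l0; split=> i Hi; first exact: ltnW (I0 i Hi).
    case: (ltnP l0 i) => Hi'; first exact: D0.
    by have -> : i = l0 by lia.
  exists l0.+1; split=> i Hi.
    case: (ltnP i l0) => Hi'; first exact: ltnW (I0 i Hi').
    have -> : i = l0 by lia. exact: ltnW.
  exact: D0.
split.
  case: (leqP (h n.+1 l0.+1) (h n.+1 l0)) => Hc.
    exists l0; apply: (is_mode_ext ET); split.
      by case: l0 l0pos I0 {D0 Hl0 Hc} => // l0 _ I0; apply: I0.
    move=> j Hj; case: (ltnP l0 j) => Hj'; first exact: D0.
    by have -> : j = l0 by lia.
  exists l0.+1; apply: (is_mode_ext ET); split; [exact: Hc | exact: D0].
move=> i l Hi Hl.
have Hl' : is_mode (g n.+3) l by apply: (is_mode_ext (fun j => esym (EP j))).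
have Hi' : is_mode (h n.+1) i by apply: (is_mode_ext (fun j => esym (ET j))).
have [I D] := key hn Hl'.
case: Hi' => Hi1 Hi2.
apply/andP; split.
  rewrite leqNgt; apply/negP => Hil.
  case: l Hl Hl' I D Hil => [|l] Hl Hl' I D Hil //.
  have := Hi2 l (Hil : i <= l); rewrite leqNgt (I l (leqnn _)) //.
clear Hi; case: i Hi1 Hi2 => [|i] Hi1 Hi2; first by [].
rewrite leqNgt; apply/negP => Hil.
have Hli : l < i by lia.
by have := D i Hli; rewrite leqNgt Hi1.
Qed.

Unset Implicit Arguments.

Theorem proposition3p5 (n : nat) (hn : 5 <= n) :
  unimodal (indep_count (@tadpole_adj 5 n)) /\
  (exists i, is_mode (indep_count (@tadpole_adj 5 n)) i) /\
  (forall i l, is_mode (indep_count (@tadpole_adj 5 n)) i ->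
               is_mode (indep_count (@path_adj (n + 2))) l ->
               l <= i <= l + 2).
Proof.
exact: (@main n hn).
Qed.
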